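(* Let $\omega_2\in\mathbb{D}$, $\omega_1,\omega_4\in\overline{\mathbb{D}}$, $\alpha_1,\alpha_2,\alpha_3,\beta_1,\beta_2,\gamma\in\mathbb{C}$, and $$T=\begin{pmatrix}\omega_1&\alpha_1&\beta_1&\gamma\\0&\omega_2&\alpha_2&\beta_2\\0&0&0&\alpha_3\\0&0&0&\omega_4\end{pmatrix}\in\mathcal{M}_4(\mathbb{C}).$$ Write $\delta_i=1-|\omega_i|^2$ for $i=1,2,4$. Then $T$ is a contraction on $\mathbb{C}^4$ if and only if one of the following holds: (A) $|\alpha_1|^2\le\delta_1\delta_2$, $|\alpha_3|^2\le\delta_4$, $|\alpha_2|^2=\delta_2$, $\beta_1=-\dfrac{\alpha_1\alpha_2\overline{\omega_2}}{\delta_2}$, $\beta_2=0$, and $$|\gamma|^2\delta_2\le(\delta_1\delta_2-|\alpha_1|^2)(\delta_4-|\alpha_3|^2);$$ (B) $|\alpha_1|^2\le\delta_1\delta_2$, $|\alpha_3|^2\le\delta_4$, $|\alpha_2|^2<\delta_2$, $$|\beta_1\delta_2+\alpha_1\alpha_2\overline{\omega_2}|^2\le(\delta_1\delta_2-|\alpha_1|^2)(\delta_2-|\alpha_2|^2),\qquad |\beta_2|^2\le(\delta_2-|\alpha_2|^2)(\delta_4-|\alpha_3|^2),$$ and $$\big|\gamma(\delta_2-|\alpha_2|^2)+\beta_2(\overline{\omega_2}\alpha_1+\overline{\alpha_2}\beta_1)\big|^2\delta_2\le\Big[(\delta_1\delta_2-|\alpha_1|^2)(\delta_2-|\alpha_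2|^2)-|\beta_1\delta_2+\alpha_1\alpha_2\overline{\omega_2}|^2\Big]\cdot\Big[(\delta_2-|\alpha_2|^2)(\delta_4-|\alpha_3|^2)-|\beta_2|^2\Big].$$
   Context: $\mathbb{D}$ denotes the open unit disk in $\mathbb{C}$ and $\overline{\mathbb{D}}$ the closed unit disk. $\mathbb{C}^4$ carries its standard inner product, and a matrix $T$ is a contraction if its Euclidean operator norm satisfies $\|T\|\le1$. $\overline{z}$ denotes complex conjugation. *)

(* Defs.v *)
From mathcomp Require Import all_boot all_algebra.
From mathcomp Require Import complex.
From mathcomp Require Import reals.
Import GRing.Theory Num.Theory.
Set Implicit Arguments. Unset Strict Implicit. Unset Printing Implicit Defensive.
Local Open Scope ring_scope.

Definition vnorm2 (C : numClosedFieldType) (n : nat) (x : 'cV[C]_n) : C :=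
  \sum_(i < n) `|x i 0| ^+ 2.

Definition contraction (C : numClosedFieldType) (n : nat) (T : 'M[C]_n) : Prop :=
  forall x : 'cV[C]_n, vnorm2 (T *m x) <= vnorm2 x.

Definition Tmat (C : numClosedFieldType) (w1 w2 w4 a1 a2 a3 b1 b2 g : C) : 'M[C]_4 :=
  \matrix_(i < 4, j < 4)
    nth 0 (nth [::] [:: [:: w1; a1; b1; g];
                        [:: 0 ; w2; a2; b2];
                        [:: 0 ; 0 ; 0 ; a3];
                        [:: 0 ; 0 ; 0 ; w4]] i) j.

(* Main.v *)
Require Import Defs.
From mathcomp Require Import all_boot all_order all_algebra.
From mathcomp Require Import ring.
From mathcomp Require Import complex.
From mathcomp Require Import reals.
Import Order.TTheory GRing.Theory Num.Theory.
Local Open Scope ring_scope.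
Section S.
Variable C : numClosedFieldType.
Variables w1 w2 w4 a1 a2 a3 b1 b2 g : C.
Definition cn (z : C) := z * z^*.
Definition re2 (t b : C) := t^* * b + t * b^*.
Lemma cjM (x y : C) : (x * y)^* = x^* * y^*. Proof. exact: rmorphM. Qed.
Lemma cjD (x y : C) : (x + y)^* = x^* + y^*. Proof. exact: rmorphD. Qed.
Lemma cjB (x y : C) : (x - y)^* = x^* - y^*. Proof. exact: rmorphB. Qed.
Lemma cjN (x : C) : (- x)^* = - x^*. Proof. exact: rmorphN. Qed.
Lemma cj1 : (1 : C)^* = 1. Proof. exact: rmorph1. Qed.
Lemma cj0 : (0 : C)^* = 0. Proof. exact: rmorph0. Qed.
Lemma cjV (x : C) : (x^-1)^* = (x^*)^-1. Proof. exact: fmorphV. Qed.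
Ltac cj := rewrite ?(cjM, cjD, cjB, cjN, cj1, cj0, conjCK, cjV).

Lemma cn_ge0 z : 0 <= cn z.
Proof. by rewrite /cn -normCK exprn_ge0. Qed.
Lemma cn_eq0 z : (cn z == 0) = (z == 0).
Proof. by rewrite /cn -normCK expf_eq0 /= normr_eq0. Qed.

Lemma schur (a q b : C) : 0 <= a ->
  (forall t, 0 <= a * cn t - re2 t b + q) <-> (0 <= q /\ cn b <= a * q).
Proof.
move=> ha; have ar : a^* = a by apply/conj_Creal/ger0_real.
split.
- move=> H; have hq : 0 <= q by have := H 0; rewrite /cn /re2; cj; rewrite !mul0r mulr0 addr0 subr0 add0r.
  have qr : q^* = q by apply/conj_Creal/ger0_real.
  split => //.
  case: (eqVneq a 0) => [a0|an0].
  + subst a; rewrite mul0r.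
    case: (eqVneq b 0) => [->|bn0]; first by rewrite /cn mul0r.
    have cnb : cn b != 0 by rewrite cn_eq0.
    have cr : (cn b)^* = cn b by rewrite /cn; cj; rewrite mulrC.
    have := H (b * ((q + 1) / cn b)).
    have -> : 0 * cn (b * ((q + 1) / cn b)) - re2 (b * ((q + 1) / cn b)) b + q = - (q + 1 + 1).
      rewrite /re2; cj; rewrite qr [b^* * b]mulrC. rewrite /cn in cnb *. field. by rewrite !conjC_eq0 bn0.
    rewrite oppr_ge0 => h.
    have : 0 < q + 1 + 1 by rewrite -addrA; apply: ltr_wpDl hq _; apply: addr_gt0; exact: ltr01.
    by move=> hp; have := lt_le_trans hp h; rewrite ltxx.
  + have apos : 0 < a by rewrite lt_def an0.
    have := H (b / a).
    have -> : a * cn (b / a) - re2 (b / a) b + q = q - cn b / a.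
      rewrite /re2 /cn; cj; rewrite ar. field. done.
    by rewrite subr_ge0 ler_pdivrMr // mulrC.
- move=> [hq hb] t.
  case: (eqVneq a 0) => [a0|an0].
  + subst a; rewrite mul0r in hb.
    have b0 : b = 0 by apply/eqP; rewrite -cn_eq0 eq_le hb cn_ge0.
    by subst b; rewrite /re2 mul0r mulr0 cj0 mulr0 addr0 subr0 add0r.
  + have apos : 0 < a by rewrite lt_def an0.
    rewrite -(pmulr_rge0 _ apos).
    have -> : a * (a * cn t - re2 t b + q) = cn (a * t - b) + (a * q - cn b).
      rewrite /re2 /cn; cj; rewrite ar; ring.
    by rewrite addr_ge0 ?cn_ge0 // subr_ge0.
Qed.

Lemma schur_pos (a q b : C) : 0 < a ->
  (forall t, 0 <= a * cn t - re2 t b + q) <-> 0 <= a * q - cn b.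
Proof.
move=> ha; rewrite (schur a q b (ltW ha)); split.
  by move=> [_ h]; rewrite subr_ge0.
move=> h; rewrite subr_ge0 in h; split=> //.
by rewrite -(pmulr_rge0 _ ha); apply: le_trans h; apply: cn_ge0.
Qed.
Definition o1 : 'I_4 := widen_ord (leqnSn 3) (widen_ord (leqnSn 2) (widen_ord (leqnSn 1) ord_max)).
Definition o2 : 'I_4 := widen_ord (leqnSn 3) (widen_ord (leqnSn 2) ord_max).
Definition o3 : 'I_4 := widen_ord (leqnSn 3) ord_max.
Definition o4 : 'I_4 := ord_max.
Definition Phi x1 x2 x3 x4 := cn x1 + cn x2 + cn x3 + cn x4 -
  (cn (w1*x1 + a1*x2 + b1*x3 + g*x4) + cn (w2*x2 + a2*x3 + b2*x4) + cn (a3*x4) + cn (w4*x4)).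
Lemma expand (x : 'cV[C]_4) : vnorm2 x - vnorm2 (Tmat w1 w2 w4 a1 a2 a3 b1 b2 g *m x) = Phi (x o1 0) (x o2 0) (x o3 0) (x o4 0).
Proof.
rewrite /vnorm2 !big_ord_recr !big_ord0 /= !mxE !big_ord_recr !big_ord0 /= !mxE /=.
rewrite /Phi /cn /o1 /o2 /o3 /o4 !normCK. ring.
Qed.
Lemma colE x1 x2 x3 x4 : let X := \col_(i < 4) nth (0:C) [:: x1; x2; x3; x4] i in
  [/\ X o1 0 = x1, X o2 0 = x2, X o3 0 = x3 & X o4 0 = x4].
Proof. by rewrite /= !mxE. Qed.

Definition d1 := 1 - cn w1.
Definition d2 := 1 - cn w2.
Definition d4 := 1 - cn w4.
Definition Q := d4 - cn a3.
Definition P := d1 * d2 - cn a1.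
Definition D := d2 - cn a2.
Definition be := b1 * d2 + a1 * a2 * w2^*.
Definition gp := g * D + b2 * (w2^* * a1 + a2^* * b1).
Definition B1 := P * D - cn be.
Definition B2 := D * Q - cn b2.
Definition u x2 x3 x4 := a1 * x2 + b1 * x3 + g * x4.
Definition Psi0 x2 x3 x4 := cn x2 + cn x3 + Q * cn x4 - cn (w2 * x2 + a2 * x3 + b2 * x4).
Definition H y1 x2 x3 x4 := d1 * cn y1 - re2 y1 (u x2 x3 x4) + Psi0 x2 x3 x4.
Definition Rf y1 x3 x4 := d1 * cn y1 + cn x3 + Q * cn x4 - cn (a2 * x3 + b2 * x4) - re2 y1 (b1 * x3 + g * x4).
Definition bx y1 x3 x4 := w2^* * (a2 * x3 + b2 * x4) + a1^* * y1.
Definition H2 y1 x3 x4 := d2 * Rf y1 x3 x4 - cn (bx y1 x3 x4).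
Definition c3 y1 x4 := be^* * y1 + a2^* * b2 * x4.
Definition R2 y1 x4 := P * cn y1 - re2 y1 ((d2 * g + a1 * w2^* * b2) * x4) + (d2 * Q - cn b2) * cn x4.
Definition H3 y1 x4 := B1 * cn y1 - re2 y1 (d2 * gp * x4) + d2 * B2 * cn x4.

Ltac unf := rewrite /Phi /H /H2 /H3 /Rf /R2 /bx /c3 /Psi0 /u /B1 /B2 /gp /be /P /D /Q /d1 /d2 /d4 /re2 /cn; cj.

Lemma I1 x1 x2 x3 x4 : Phi x1 x2 x3 x4 =
  d1 * cn x1 - re2 x1 (w1^* * u x2 x3 x4) + (Psi0 x2 x3 x4 - cn (u x2 x3 x4)).
Proof. unf; ring. Qed.
Lemma I2 y1 x2 x3 x4 : H y1 x2 x3 x4 = d2 * cn x2 - re2 x2 (bx y1 x3 x4) + Rf y1 x3 x4.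
Proof. unf; ring. Qed.
Lemma I3 y1 x3 x4 : H2 y1 x3 x4 = D * cn x3 - re2 x3 (c3 y1 x4) + R2 y1 x4.
Proof. unf; ring. Qed.
Lemma I4 y1 x4 : D * R2 y1 x4 - cn (c3 y1 x4) = H3 y1 x4.
Proof. unf; ring. Qed.

Lemma contr_Phi : contraction (Tmat w1 w2 w4 a1 a2 a3 b1 b2 g) <->
  forall x1 x2 x3 x4, 0 <= Phi x1 x2 x3 x4.
Proof.
split.
- move=> Hc x1 x2 x3 x4.
  have := Hc (\col_(i < 4) nth (0:C) [:: x1; x2; x3; x4] i).
  by rewrite -subr_ge0 expand !mxE.
- move=> Hp x; rewrite -subr_ge0 expand; exact: Hp.
Qed.

Hypothesis hw1 : cn w1 <= 1.
Hypothesis hw2 : cn w2 < 1.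

Lemma d1_ge0 : 0 <= d1. Proof. by rewrite /d1 subr_ge0. Qed.
Lemma d2_gt0 : 0 < d2. Proof. by rewrite /d2 subr_gt0. Qed.

Lemma step1 : (forall x1 x2 x3 x4, 0 <= Phi x1 x2 x3 x4) <->
  (forall y1 x2 x3 x4, 0 <= H y1 x2 x3 x4).
Proof.
have key : forall x2 x3 x4, (forall x1, 0 <= Phi x1 x2 x3 x4) <->
   (0 <= Psi0 x2 x3 x4 /\ cn (u x2 x3 x4) <= d1 * Psi0 x2 x3 x4).
  move=> x2 x3 x4.
  have -> : (forall x1, 0 <= Phi x1 x2 x3 x4) <-> (forall x1,
    0 <= d1 * cn x1 - re2 x1 (w1^* * u x2 x3 x4) + (Psi0 x2 x3 x4 - cn (u x2 x3 x4))).
    by split=> h x1; [rewrite -I1 | rewrite I1].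
  rewrite schur; last exact: d1_ge0.
  set p := Psi0 x2 x3 x4; set s := cn (u x2 x3 x4).
  have e : d1 * (p - s) - cn (w1^* * u x2 x3 x4) = d1 * p - s.
    by rewrite /s /d1 /cn; cj; ring.
  have hs : 0 <= s by apply: cn_ge0.
  rewrite -[cn (w1^* * _) <= _]subr_ge0 e [0 <= d1 * p - s]subr_ge0 [0 <= p - s]subr_ge0.
  split=> -[h1 h2]; split=> //.
  + exact: le_trans hs h1.
  + apply: le_trans h2 _.
    rewrite -subr_ge0; have -> : p - d1 * p = cn w1 * p by rewrite /d1; ring.
    by apply: mulr_ge0 => //; apply: cn_ge0.
split.
- move=> h y1 x2 x3 x4; move: y1.
  suff: forall t, 0 <= d1 * cn t - re2 t (u x2 x3 x4) + Psi0 x2 x3 x4 by [].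
  rewrite schur; last exact: d1_ge0.
  by apply/key => x1; apply: h.
- move=> h x1 x2 x3 x4; move: x1; apply/key.
  rewrite -schur; last exact: d1_ge0.
  by move=> t; apply: h.
Qed.

Lemma step2 : (forall y1 x2 x3 x4, 0 <= H y1 x2 x3 x4) <->
  (forall y1 x3 x4, 0 <= H2 y1 x3 x4).
Proof.
have key : forall y1 x3 x4, (forall x2, 0 <= H y1 x2 x3 x4) <-> 0 <= H2 y1 x3 x4.
  move=> y1 x3 x4; rewrite /H2 -schur_pos; last exact: d2_gt0.
  by split=> h x2; [rewrite -I2 | rewrite I2].
split.
- by move=> h y1 x3 x4; apply/key.
- by move=> h y1 x2 x3 x4; move: x2; apply/key.
Qed.

Lemma d2r : d2^* = d2. Proof. rewrite /d2 /cn; cj; ring. Qed.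
Lemma d2n0 : d2 != 0. Proof. exact: lt0r_neq0 d2_gt0. Qed.

Lemma final : (forall y1 x3 x4, 0 <= H2 y1 x3 x4) <->
  ((cn a1 <= d1 * d2 /\ cn a3 <= d4 /\ cn a2 = d2 /\ b1 = - (a1 * a2 * w2^*) / d2 /\
    b2 = 0 /\ cn g * d2 <= P * Q)
  \/ (cn a1 <= d1 * d2 /\ cn a3 <= d4 /\ cn a2 < d2 /\ cn be <= P * D /\
    cn b2 <= D * Q /\ cn gp * d2 <= B1 * B2)).
Proof.
split.
- move=> K.
  have hD : 0 <= D.
    have := K 0 1 0; have -> // : H2 0 1 0 = D by unf; ring.
  have K' : forall y1 x4, 0 <= R2 y1 x4 /\ cn (c3 y1 x4) <= D * R2 y1 x4.
    move=> y1 x4; apply/(schur _ _ _ hD) => x3; rewrite -I3; exact: K.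
  have hP : 0 <= P.
    have := (K' 1 0).1; have -> // : R2 1 0 = P by rewrite /R2 /re2 /cn; cj; ring.
  case: (eqVneq D 0) => [D0 | Dn0].
  + left.
    have c0 : forall y1 x4, c3 y1 x4 = 0.
      move=> y1 x4; have := (K' y1 x4).2; rewrite D0 mul0r => h.
      by apply/eqP; rewrite -cn_eq0 eq_le h cn_ge0.
    have be0 : be = 0.
      have := c0 1 0; rewrite /c3 mulr1 mulr0 addr0 => /eqP; rewrite conjC_eq0.
      by move/eqP.
    have ca2 : cn a2 = d2.
      by move: D0; rewrite /D => /eqP; rewrite subr_eq0 => /eqP ->.
    have a2n : a2 != 0 by rewrite -cn_eq0 ca2 d2n0.
    have b20 : b2 = 0.
      have := c0 0 1; rewrite /c3 mulr0 add0r mulr1 => /eqP.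
      by rewrite mulf_eq0 conjC_eq0 (negPf a2n) /= => /eqP.
    have [hq hb] := (schur _ _ _ hP).1 (fun t => (K' t 1).1).
    rewrite b20 in hq hb.
    have e1 : (d2 * Q - cn 0) * cn 1 = d2 * Q by rewrite /cn; cj; ring.
    have e2 : cn ((d2 * g + a1 * w2^* * 0) * 1) = d2 * (cn g * d2).
      by rewrite /d2 /cn; cj; ring.
    have e3 : P * (d2 * Q) = d2 * (P * Q) by ring.
    rewrite e1 in hq; rewrite e1 e2 e3 ler_pM2l in hb; last exact: d2_gt0.
    have hQ : 0 <= Q by rewrite -(pmulr_rge0 _ d2_gt0).
    split; first by rewrite -subr_ge0.
    split; first by rewrite -subr_ge0.
    split=> //.
    split.
      have -> : b1 = (be - a1 * a2 * w2^*) / d2 by rewrite /be; field; exact: d2n0.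
      by rewrite be0 sub0r.
    by split.
  + right.
    have Dpos : 0 < D by rewrite lt_def Dn0 hD.
    have K3 : forall y1 x4, 0 <= H3 y1 x4.
      move=> y1 x4; rewrite -I4; apply/(schur_pos _ _ _ Dpos) => x3; rewrite -I3; exact: K.
    have hB1 : 0 <= B1.
      have := K3 1 0; have -> // : H3 1 0 = B1 by rewrite /H3 /re2 /cn; cj; ring.
    have hB2 : 0 <= B2.
      have := K3 0 1; have -> : H3 0 1 = d2 * B2 by rewrite /H3 /re2 /cn; cj; ring.
      by rewrite pmulr_rge0 //; exact: d2_gt0.
    have [_ hb] := (schur _ _ _ hB1).1 (fun t => K3 t 1).
    have e2 : cn (d2 * gp * 1) = d2 * (cn gp * d2) by rewrite /d2 /cn; cj; ring.
    have e1 : B1 * (d2 * B2 * cn 1) = d2 * (B1 * B2) by rewrite /cn; cj; ring.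
    rewrite e1 e2 ler_pM2l in hb; last exact: d2_gt0.
    have hPD : cn be <= P * D by rewrite -subr_ge0.
    have hDQ : cn b2 <= D * Q by rewrite -subr_ge0.
    have hP' : 0 <= P by rewrite -(pmulr_lge0 _ Dpos); exact: le_trans (cn_ge0 _) hPD.
    have hQ' : 0 <= Q by rewrite -(pmulr_rge0 _ Dpos); exact: le_trans (cn_ge0 _) hDQ.
    split; first by rewrite -subr_ge0.
    split; first by rewrite -subr_ge0.
    split; first by rewrite -subr_gt0.
    by [].
- have R2pos : 0 <= P -> 0 <= Q -> b2 = 0 -> cn g * d2 <= P * Q -> forall y1 x4, 0 <= R2 y1 x4.
    move=> hP hQ hb2 hg y x; rewrite /R2; move: y; apply/(schur _ _ _ hP); rewrite hb2.
    have e1 : (d2 * Q - cn 0) * cn x = d2 * Q * cn x by rewrite /cn; cj; ring.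
    have e2 : cn ((d2 * g + a1 * w2^* * 0) * x) = (cn g * d2) * (d2 * cn x).
      by rewrite /d2 /cn; cj; ring.
    have e3 : P * (d2 * Q * cn x) = (P * Q) * (d2 * cn x) by ring.
    rewrite e1 e2 e3; split.
      by rewrite mulr_ge0 ?cn_ge0 // mulr_ge0 // ltW // d2_gt0.
    by rewrite ler_wpM2r // mulr_ge0 ?cn_ge0 // ltW // d2_gt0.
  move=> [[hP' [hQ' [ha2 [hb1 [hb2 hg]]]]] | [hP' [hQ' [ha2 [hbe [hb2' hg]]]]]] y1 x3 x4.
  + have D0 : D = 0 by rewrite /D ha2 subrr.
    have be0 : be = 0 by rewrite /be hb1; field; exact: d2n0.
    have hP : 0 <= P by rewrite /P subr_ge0.
    have hQ : 0 <= Q by rewrite /Q subr_ge0.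
    rewrite I3 D0; move: x3; apply/(schur 0 _ _ (lexx 0)); split.
      exact: R2pos.
    have -> : c3 y1 x4 = 0 by rewrite /c3 be0 hb2 cj0; ring.
    by rewrite /cn !mul0r.
  + have Dpos : 0 < D by rewrite /D subr_gt0.
    have hB1 : 0 <= B1 by rewrite /B1 subr_ge0.
    have hB2 : 0 <= B2 by rewrite /B2 subr_ge0.
    rewrite I3; move: x3; apply/(schur_pos _ _ _ Dpos); rewrite I4 /H3; move: y1.
    apply/(schur _ _ _ hB1).
    have e2 : cn (d2 * gp * x4) = (cn gp * d2) * (d2 * cn x4) by rewrite /d2 /cn; cj; ring.
    have e3 : B1 * (d2 * B2 * cn x4) = (B1 * B2) * (d2 * cn x4) by ring.
    rewrite e2 e3; split.
      by rewrite mulr_ge0 ?cn_ge0 // mulr_ge0 // ltW // d2_gt0.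
    by rewrite ler_wpM2r // mulr_ge0 ?cn_ge0 // ltW // d2_gt0.
Qed.

Lemma main_sec : contraction (Tmat w1 w2 w4 a1 a2 a3 b1 b2 g) <->
  ((cn a1 <= d1 * d2 /\ cn a3 <= d4 /\ cn a2 = d2 /\ b1 = - (a1 * a2 * w2^*) / d2 /\
    b2 = 0 /\ cn g * d2 <= P * Q)
  \/ (cn a1 <= d1 * d2 /\ cn a3 <= d4 /\ cn a2 < d2 /\ cn be <= P * D /\
    cn b2 <= D * Q /\ cn gp * d2 <= B1 * B2)).
Proof. by rewrite contr_Phi step1 step2 final. Qed.
End S.

Theorem lemma2p2 (R : realType) (w1 w2 w4 a1 a2 a3 b1 b2 g : R[i]) :
  `|w2| < 1 -> `|w1| <= 1 -> `|w4| <= 1 ->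
  let d1 := 1 - `|w1| ^+ 2 in
  let d2 := 1 - `|w2| ^+ 2 in
  let d4 := 1 - `|w4| ^+ 2 in
  contraction (Tmat w1 w2 w4 a1 a2 a3 b1 b2 g) <->
  ( (* (A) *)
    (`|a1| ^+ 2 <= d1 * d2 /\ `|a3| ^+ 2 <= d4 /\ `|a2| ^+ 2 = d2 /\
     b1 = - (a1 * a2 * w2^*) / d2 /\ b2 = 0 /\
     `|g| ^+ 2 * d2 <= (d1 * d2 - `|a1| ^+ 2) * (d4 - `|a3| ^+ 2))
  \/
    (* (B) *)
    (`|a1| ^+ 2 <= d1 * d2 /\ `|a3| ^+ 2 <= d4 /\ `|a2| ^+ 2 < d2 /\
     `|b1 * d2 + a1 * a2 * w2^*| ^+ 2
        <= (d1 * d2 - `|a1| ^+ 2) * (d2 - `|a2| ^+ 2) /\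
     `|b2| ^+ 2 <= (d2 - `|a2| ^+ 2) * (d4 - `|a3| ^+ 2) /\
     `|g * (d2 - `|a2| ^+ 2) + b2 * (w2^* * a1 + a2^* * b1)| ^+ 2 * d2
        <= ((d1 * d2 - `|a1| ^+ 2) * (d2 - `|a2| ^+ 2)
              - `|b1 * d2 + a1 * a2 * w2^*| ^+ 2)
           * ((d2 - `|a2| ^+ 2) * (d4 - `|a3| ^+ 2) - `|b2| ^+ 2)) ).
Proof.
move=> h2 h1 h4 d1 d2 d4.
have hw1 : @cn _ w1 <= 1 by rewrite /cn -normCK exprn_ile1.
have hw2 : @cn _ w2 < 1 by rewrite /cn -normCK exprn_ilt1.
rewrite /d1 /d2 /d4 !normCK.
exact: (@main_sec _ w1 w2 w4 a1 a2 a3 b1 b2 g hw1 hw2).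
Qed.
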